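(* Let $N\ge3$ and let $s=(x^1,\dots,x^m,\dots,x^{N-1},u,N)\in S^N\cap S_{nc}$ be a state with $c(G|s)=1$, $\widehat C(s)=C_m$, having the sure-capture property, and with $x^m\notin N(u)$. Then there exists a state $\tilde s=(x^1,\dots,\tilde x^m,\dots,x^{N-1},u,N)\in S^N\cap S_{nc}$, differing from $s$ only in the position of $C_m$, such that (i) $\tilde x^m\in N(u)$, (ii) $c(G|\tilde s)=1$, (iii) $\widehat C(\tilde s)=C_m$, and (iv) $\tilde s$ has the sure-capture property.
   Context: Board and moves: $G=(V,E)$ finite, simple, connected, undirected; $N(u)$ is the open neighbourhood of $u$. There are $N\ge3$ tokens, cops $C_1,\dots,C_{N-1}$ (tokens $1,\dots,N-1$) and robber $R$ (token $N$). A state is $s=(x^1,\dots,x^N,n)$ with $x^i\in V$ the position of token $i$ and $n$ the token to move; $S^n$ is the set of states with token $n$ to move; $s$ is a capture state if $x^i=x^N$ for some $i\le N-1$, and $S_{nc}$ is the set of noncapture states. In each turn the token to move moves to a vertex of its closed neighbourhood (may stay put); order $C_1,\dots,C_{N-1},R,C_1,\dots$; the game ends at the first capture. The modified cops-and-robber (CR) game is the two-player zero-sum game where one player controls all cops, the other the robber, and if capture occurs at time $t$ (number of turns) the robber's payoff is $-\gamma^t$ ($0$ if never), $\gamma\in(0,1)$. $\widehat\Sigma^n$ denotes the set of pure positional strategies of token $n$ that are components of optimal strategies in this game (CR-optimal strategies). For $s\in S_{nc}$, whenever CR-optimal play from $s$ leads to capture, it is always the same cop, denoted $\widehat C(s)$,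 that effects it. State cop number. For $s\in S_{nc}$, $c(G|s)=c_N(G|s)$ is the minimum $k\in\{1,\dots,N-1\}$ for which there exist $k$ cops and strategies for them such that, starting from $s$, a capture (by any cop) occurs whatever the other $N-k$ tokens (including $R$) do; $c(G|s)=\infty$ if no such $k$ exists. Say that a state $s\in S_{nc}$ with $c(G|s)=1$ and $\widehat C(s)=C_m$ has the sure-capture property if for every $\widehat\sigma^m\in\widehat\Sigma^m$ and every strategy profile $\sigma^{-m}$ of the other tokens, play from $s$ under $(\widehat\sigma^m,\sigma^{-m})$ ends in a capture in which $C_m$ is on the robber's vertex. *)

(* Defs.v *)
From Stdlib Require Import Reals ClassicalEpsilon.
From mathcomp Require Import all_boot.

Set Implicit Arguments.
Unset Strict Implicit.
Unset Printing Implicit Defensive.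

Definition simple_connected_graph (V : finType) (e : rel V) : Prop :=
  symmetric e /\ irreflexive e /\ (forall x y : V, connect e x y).

Section CR.
Variables (V : finType) (e : rel V).
(* N = n.+1 tokens, indexed by 'I_n.+1 : tokens 0 .. n-1 are the cops
   C_1 .. C_{N-1}, token n (= ord_max) is the robber R. *)
Variable n : nat.

Definition token := 'I_n.+1.
Definition robber : token := ord_max.
Definition is_cop (i : token) : bool := i != robber.

Definition state := ({ffun token -> V} * token)%type.
Definition position (s : state) (i : token) : V := s.1 i.
Definition turn (s : state) : token := s.2.

Definition captured (s : state) : bool :=
  [exists i : token, is_cop i && (position s i == position s robber)].

Definition closed_nbr (x y : V) : bool := (y == x) || e x y.

Definition strategy := state -> V.
Definition legal (i : token) (f : strategy) : Prop :=
  forall s : state, turn s = i -> closed_nbr (position s i) (f s).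
Definition profile := token -> strategy.
Definition legal_profile (p : profile) : Prop := forall i, legal i (p i).

(* one turn: the token to move moves, then the turn passes cyclically
   C_1, ..., C_{N-1}, R, C_1, ... *)
Definition step (p : profile) (s : state) : state :=
  ([ffun i => if i == turn s then p (turn s) s else position s i], ordS (turn s)).

Definition play (p : profile) (s : state) (t : nat) : state :=
  iter t (step p) s.

Definition capture_time (p : profile) (s : state) : option nat :=
  match excluded_middle_informative
          (exists t, (fun t => captured (play p s t)) t) with
  | left H => Some (ex_minn H)
  | right _ => None
  end.

Definition capture_at (p : profile) (s : state) (t : nat) : Prop :=
  captured (play p s t) /\ forall t', t' < t -> ~~ captured (play p s t').

Section Payoff.
Variable gamma : R.

Definition robber_payoff (p : profile) (s : state) : R :=
  match capture_time p s with
  | Some t => Ropp (pow gamma t)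
  | None => R0
  end.

(* CR-optimal profile: a saddle point of the zero-sum game (cops' player
   minimises, robber's player maximises the robber's payoff), from every
   initial state, against all (pure positional) deviations. *)
Definition CR_optimal (p : profile) : Prop :=
  legal_profile p /\
  forall s : state,
    (forall q : profile, legal_profile q ->
       (forall x, q robber x = p robber x) ->
       Rle (robber_payoff p s) (robber_payoff q s)) /\
    (forall q : profile, legal_profile q ->
       (forall i, is_cop i -> forall x, q i x = p i x) ->
       Rle (robber_payoff q s) (robber_payoff p s)).

Definition hatSigma (i : token) (f : strategy) : Prop :=
  exists p, CR_optimal p /\ forall x, p i x = f x.

(* \hat C(s) = C_m : CR-optimal play from s leads to capture, and whenever it
   does, cop m is the one that effects it (is on the robber's vertex). *)
Definition hatC_is (s : state) (m : token) : Prop :=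
  is_cop m /\
  (exists p, CR_optimal p /\ exists t, capture_at p s t) /\
  (forall p t, CR_optimal p -> capture_at p s t ->
     position (play p s t) m = position (play p s t) robber).

Definition sure_capture (s : state) (m : token) : Prop :=
  forall f, hatSigma m f ->
  forall p : profile, legal_profile p -> (forall x, p m x = f x) ->
    exists t, capture_at p s t /\
      position (play p s t) m = position (play p s t) robber.
End Payoff.

Definition guarantee_capture (K : {set token}) (s : state) : Prop :=
  exists pK : profile, (forall i, i \in K -> legal i (pK i)) /\
  forall p : profile, legal_profile p ->
    (forall i, i \in K -> forall x, p i x = pK i x) ->
    exists t, captured (play p s t).

Definition k_cops_capture (k : nat) (s : state) : Prop :=
  exists K : {set token}, #|K| = k /\ (forall i, i \in K -> is_cop i) /\
    guarantee_capture K s.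

Definition state_cop_number_is (s : state) (k : nat) : Prop :=
  1 <= k <= n /\ k_cops_capture k s /\
  forall k', 1 <= k' < k -> ~ k_cops_capture k' s.

End CR.

(* Main.v *)
Require Import Defs.
From Stdlib Require Import Reals ClassicalEpsilon Classical Lra.
From mathcomp Require Import all_boot.
From mathcomp Require Import zify.

Set Implicit Arguments.
Unset Strict Implicit.
Unset Printing Implicit Defensive.

Definition ctle (a b : option nat) : Prop :=
  match b with None => True | Some y => match a with Some x => (x <= y)%N | None => False end end.

Lemma ctle_trans a b c : ctle a b -> ctle b c -> ctle a c.
Proof. case: c => [z|] //; case: b => [y|] //; case: a => [x|] //= H1 H2; lia. Qed.

Lemma ctle_antisym a b : ctle a b -> ctle b a -> a = b.
Proof. case: a => [x|]; case: b => [y|] //= H1 H2. f_equal; lia. Qed.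

Lemma ctle_succ a b : ctle a b -> ctle (omap succn a) (omap succn b).
Proof. case: b => [y|] //; case: a => [x|] //=. Qed.

Lemma play0 V n (p : profile V n) s : play p s 0 = s. Proof. by []. Qed.
Lemma playS V n (p : profile V n) s k : play p s k.+1 = step p (play p s k).
Proof. exact: iterS. Qed.
Lemma playSr V n (p : profile V n) s k : play p s k.+1 = play p (step p s) k.
Proof. exact: iterSr. Qed.
Lemma playD V n (p : profile V n) s a b : play p s (a + b) = play p (play p s a) b.
Proof. by rewrite /play addnC iterD. Qed.

Lemma ctP V n (p : profile V n) s :
  match capture_time p s with
  | Some T => capture_at p s T
  | None => forall j, ~~ captured (play p s j) end.
Proof.
rewrite /capture_time; case: excluded_middle_informative => [H|H].
- case: (ex_minnP H) => T HT Hmin; split => // t' Ht'.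
  apply/negP => Hc; have := Hmin _ Hc; by rewrite leqNgt Ht'.
- move=> j; apply/negP => Hc; apply: H; by exists j.
Qed.

Lemma capture_at_uniq V n (p : profile V n) s T T' :
  capture_at p s T -> capture_at p s T' -> T = T'.
Proof.
move=> [c1 m1] [c2 m2]; case: (ltngtP T T') => // H.
- by move: (m2 _ H); rewrite c1.
- by move: (m1 _ H); rewrite c2.
Qed.

Lemma ct_at V n (p : profile V n) s T : capture_at p s T -> capture_time p s = Some T.
Proof.
move=> H; have := ctP p s; case: (capture_time p s) => [T'|] H'.
- by rewrite (capture_at_uniq H H').
- by move: (H' T); rewrite H.1.
Qed.

Lemma ct_never V n (p : profile V n) s :
  (forall j, ~~ captured (play p s j)) -> capture_time p s = None.
Proof.
move=> H; have := ctP p s; case: (capture_time p s) => [T'|] // [H' _].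
by move: (H T'); rewrite H'.
Qed.

Lemma ct_capt V n (p : profile V n) s : captured s -> capture_time p s = Some 0.
Proof. move=> H; apply: ct_at; by split. Qed.

Lemma ct_step V n (p : profile V n) s : ~~ captured s ->
  capture_time p s = omap succn (capture_time p (step p s)).
Proof.
move=> Hs; have := ctP p (step p s); case: (capture_time p (step p s)) => [T|] /=.
- move=> [HT Hm]; apply: ct_at; split; first by rewrite playSr.
  case=> [|t'] // Ht'; rewrite playSr; exact: Hm.
- move=> H; apply: ct_never; case=> [|j] //; by rewrite playSr.
Qed.

Section Pay.
Variables (gamma : R) (Hg0 : Rlt R0 gamma) (Hg1 : Rlt gamma R1).

Lemma g0 : Rlt 0 gamma. Proof. exact Hg0. Qed.
Lemma g1 : Rlt gamma 1. Proof. exact Hg1. Qed.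

Lemma pow_pos k : Rlt 0 (pow gamma k).
Proof. apply: pow_lt; exact: g0. Qed.

Lemma pow_decr a b : (a < b)%N -> Rlt (pow gamma b) (pow gamma a).
Proof.
elim: b => [|b IH] //; rewrite ltnS leq_eqVlt => /orP [/eqP ->|H].
- simpl; have := pow_pos b; have := g0; have := g1; nra.
- have := IH H; simpl; have := pow_pos b; have := g0; have := g1; nra.
Qed.

Lemma pay_le V n (p q : profile V n) s s' :
  Rle (robber_payoff gamma p s) (robber_payoff gamma q s') <->
  ctle (capture_time p s) (capture_time q s').
Proof.
rewrite /robber_payoff; case: (capture_time q s') => [b|];
  case: (capture_time p s) => [a|] /=.
- split => H.
  + rewrite leqNgt; apply/negP => Hlt; have := pow_decr Hlt; lra.
  + move: H; rewrite leq_eqVlt => /orP [/eqP ->|H]; first lra.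
    have := pow_decr H; lra.
- split => // H; have := pow_pos b; lra.
- split => // _; have := pow_pos a; lra.
- split => // _; lra.
Qed.
End Pay.

Lemma step_ext V n (p q : profile V n) s : p (turn s) s = q (turn s) s -> step p s = step q s.
Proof. by rewrite /step => ->. Qed.

Lemma pos_step V n (p : profile V n) s i :
  position (step p s) i = if i == turn s then p (turn s) s else position s i.
Proof. by rewrite /position /step /= ffunE. Qed.

Lemma turn_step V n (p : profile V n) s : turn (step p s) = ordS (turn s).
Proof. by []. Qed.

Lemma agree_play V n (p q : profile V n) s K :
  (forall j, j < K -> step p (play p s j) = step q (play p s j)) ->
  forall j, j <= K -> play q s j = play p s j.
Proof.
move=> H; elim=> [|j IH] // Hj.
rewrite !playS IH ?(ltnW Hj) //; by rewrite H.
Qed.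

Lemma loop_never V n (p : profile V n) z K : 0 < K -> play p z K = z ->
  (forall j, j < K -> ~~ captured (play p z j)) -> forall j, ~~ captured (play p z j).
Proof.
move=> K0 HK H.
have per : forall a b, play p z (a * K + b) = play p z b.
  elim=> [|a IH] b //; by rewrite mulSn -addnA playD HK IH.
move=> j; rewrite (divn_eq j K) per; apply: H; exact: ltn_pmod.
Qed.

Lemma period V n (p : profile V n) z a b : a <= b -> play p z a = play p z b ->
  forall c, a <= c -> play p z (c + (b - a)) = play p z c.
Proof.
move=> Hab E c Hc.
have -> : c + (b - a) = b + (c - a) by lia.
by rewrite playD -E -playD; congr play; lia.
Qed.

Lemma agree_ct V n (q P : profile V n) x : ~~ captured x ->
  (forall i w, w != x -> q i w = P i w) ->
  ctle (capture_time P (step q x)) (capture_time q (step q x)).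
Proof.
move=> Hx Hqp; set z := step q x.
have Hag : forall K, (forall j, j < K -> play P z j != x) ->
    forall j, j <= K -> play q z j = play P z j.
  move=> K HK; apply: agree_play => j Hj; apply: step_ext; symmetry; apply: Hqp; exact: HK.
have fromP : forall K T, capture_at P z T -> T <= K ->
    (forall j, j <= K -> play q z j = play P z j) -> capture_time q z = Some T.
  move=> K T [HT Hm] HTK Hagr; apply: ct_at; split; first by rewrite Hagr.
  move=> t' Ht'; rewrite Hagr; [exact: Hm|]; lia.
case: (classic (exists k, (fun k => play P z k == x) k)) => [Hex|Hnex].
- case: (ex_minnP Hex) => k0 /eqP Hk0 Hmin.
  have Hlt : forall j, j < k0 -> play P z j != x.
    move=> j Hj; apply/negP => Hc; have := Hmin _ Hc; by rewrite leqNgt Hj.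
  have Hagr := Hag k0 Hlt.
  case: (classic (forall j, j <= k0 -> ~~ captured (play P z j))) => [Hnc|Hc].
  + have -> : capture_time q z = None; last by case: (capture_time P z).
    apply: ct_never; apply: (@loop_never _ _ q z k0.+1) => //.
    * by rewrite playS Hagr // Hk0.
    * move=> j Hj; rewrite Hagr //; exact: Hnc.
  + have [j [Hj Hcj]] : exists j, j <= k0 /\ captured (play P z j).
      apply: NNPP => Hn; apply: Hc => j Hj; apply/negP => Hcj; apply: Hn; by exists j.
    have := ctP P z; case: (capture_time P z) => [T|] HT.
    * have HTj : T <= j.
        rewrite leqNgt; apply/negP => H; have := HT.2 _ H; by rewrite Hcj.
      rewrite (fromP k0 T HT) //=; lia.
    * by move: (HT j); rewrite Hcj.
- have Hall : forall j, play q z j = play P z j.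
    move=> j; apply: (Hag j) => // j' _; apply/negP => /eqP H; apply: Hnex; exists j'; by rewrite H.
  have := ctP P z; case: (capture_time P z) => [T|] HT.
  + by rewrite (fromP T T HT) //= => j _; exact: Hall.
  + rewrite ct_never // => j; by rewrite Hall.
Qed.

Section Opt.
Variables (V : finType) (e : rel V) (n : nat) (gamma : R).
Variables (Hg0 : Rlt R0 gamma) (Hg1 : Rlt gamma R1).

Lemma opt_cop (P : profile V n) : CR_optimal e gamma P ->
  forall q, legal_profile e q -> (forall x, q (robber n) x = P (robber n) x) ->
  forall s, ctle (capture_time P s) (capture_time q s).
Proof. move=> [_ H] q Hq Hr s; apply/(pay_le Hg0 Hg1); exact: (H s).1. Qed.

Lemma opt_rob (P : profile V n) : CR_optimal e gamma P ->
  forall q, legal_profile e q -> (forall i, is_cop i -> forall x, q i x = P i x) ->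
  forall s, ctle (capture_time q s) (capture_time P s).
Proof. move=> [_ H] q Hq Hr s; apply/(pay_le Hg0 Hg1); exact: (H s).2. Qed.

Lemma ct_uniq (P P0 : profile V n) : CR_optimal e gamma P -> CR_optimal e gamma P0 ->
  forall s, capture_time P s = capture_time P0 s.
Proof.
move=> HP HP0.
have half : forall A B : profile V n, CR_optimal e gamma A -> CR_optimal e gamma B ->
    forall s, ctle (capture_time A s) (capture_time B s).
  move=> A B HA HB s.
  pose Q : profile V n := fun i => if is_cop i then B i else A i.
  have HQ : legal_profile e Q.
    move=> i; rewrite /Q; case: (is_cop i); [exact: HB.1 | exact: HA.1].
  apply: (ctle_trans (opt_cop HA HQ _ s)).
  - by move=> x; rewrite /Q /is_cop eqxx.
  - apply: (opt_rob HB HQ) => i Hi x; by rewrite /Q Hi.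
move=> s; apply: ctle_antisym; exact: half.
Qed.

Lemma rob_local (P : profile V n) : CR_optimal e gamma P ->
  forall (q : profile V n) x, ~~ captured x -> turn x = robber n ->
  closed_nbr e (position x (robber n)) (q (robber n) x) ->
  ctle (omap succn (capture_time P (step q x))) (capture_time P x).
Proof.
move=> HP q x Hx Ht Hl.
pose q2 : profile V n := fun i w => if (i == robber n) && (w == x) then q (robber n) x else P i w.
have Hq2 : legal_profile e q2.
  move=> i w Hw; rewrite /q2; case: andP => [[/eqP Hi /eqP Hwx]|_].
  - by rewrite Hi Hwx.
  - exact: HP.1 i w Hw.
have Hs : step q2 x = step q x by apply: step_ext; rewrite Ht /q2 !eqxx.
have Hcop : forall i, is_cop i -> forall w, q2 i w = P i w.
  move=> i Hi w; move: Hi; rewrite /q2 /is_cop => /negbTE ->; done.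
have H1 := opt_rob HP Hq2 Hcop x.
rewrite ct_step // Hs in H1.
apply: (ctle_trans _ H1); apply: ctle_succ; rewrite -Hs.
apply: agree_ct => // i w Hw; by rewrite /q2 (negbTE Hw) andbF.
Qed.

Lemma greedy_ct (P P' : profile V n) :
  (forall x, ~~ captured x -> capture_time P x = omap succn (capture_time P (step P' x))) ->
  forall x, capture_time P' x = capture_time P x.
Proof.
move=> HB x; case E: (capture_time P x) => [t|].
- elim: t x E => [|t IH] x E.
  + case: (boolP (captured x)) => Hc; first by rewrite ct_capt.
    by move: E; rewrite HB //; case: (capture_time P (step P' x)).
  + case: (boolP (captured x)) => Hc; first by move: E; rewrite ct_capt.
    move: E; rewrite HB //.
    case E2: (capture_time P (step P' x)) => [t'|] //= [Et].
    by rewrite [capture_time P' x]ct_step // (IH _ (etrans E2 (f_equal Some Et))).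
- apply: ct_never.
  have H : forall j, capture_time P (play P' x j) = None.
    elim=> [|j IH] //; rewrite playS.
    have Hc : ~~ captured (play P' x j) by apply/negP => /(ct_capt P); rewrite IH.
    by move: IH; rewrite HB //; case: (capture_time P _).
  move=> j; apply/negP => /(ct_capt P); by rewrite H.
Qed.

Lemma mix_opt (P P0 : profile V n) (m : token n) (S : pred (state V n)) :
  CR_optimal e gamma P -> CR_optimal e gamma P0 -> m != robber n ->
  CR_optimal e gamma (fun i w => if (i == m) && S w then P0 i w else P i w).
Proof.
move=> HP HP0 Hm.
set P' : profile V n := fun i w => if (i == m) && S w then P0 i w else P i w.
have HL : legal_profile e P'.
  move=> i w Hw; rewrite /P'; case: ((i == m) && S w); [exact: HP0.1 i w Hw | exact: HP.1 i w Hw].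
have HB : forall x, ~~ captured x ->
    capture_time P x = omap succn (capture_time P (step P' x)).
  move=> x Hx; rewrite /P'; case E: ((turn x == m) && S x).
  - have -> : step P' x = step P0 x by apply: step_ext; rewrite /P' E.
    by rewrite !(ct_uniq HP HP0) ct_step.
  - have -> : step P' x = step P x by apply: step_ext; rewrite /P' E.
    by rewrite ct_step.
have E := greedy_ct HB.
split => // s; split.
- move=> q Hq Hr; apply/(pay_le Hg0 Hg1); rewrite E.
  apply: (opt_cop HP Hq) => x; rewrite Hr /P'.
  suff -> : (robber n == m) = false by [].
  by apply/negbTE; rewrite eq_sym.
- move=> q Hq Hc; apply/(pay_le Hg0 Hg1); rewrite E.
  case E1: (capture_time P s) => [tt|] //.
  have SB : forall x t0, ~~ captured x -> capture_time P x = Some t0 ->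
      exists t1, capture_time P (step q x) = Some t1 /\ t1 < t0.
    move=> x t0 Hnc Hx.
    case: (boolP (turn x == robber n)) => Htr.
    - have := rob_local HP (q := q) Hnc (eqP Htr) (Hq (robber n) x (eqP Htr)).
      rewrite Hx; case: (capture_time P (step q x)) => //= t1 H; by exists t1.
    - have Hst : step P' x = step q x.
        apply: step_ext; symmetry; exact: Hc.
      move: Hx; rewrite HB // Hst.
      case: (capture_time P (step q x)) => //= t1 [] <-; by exists t1.
  suff main : forall t t0 x, t0 <= t -> capture_time P x = Some t0 ->
      ctle (capture_time q x) (Some t0) by exact: (main tt).
  elim=> [|t IH] t1 x Ht1 Hx.
  + case: (boolP (captured x)) => Hcx; first by rewrite ct_capt.
    have [t2 [_ H2]] := SB x t1 Hcx Hx; lia.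
  + case: (boolP (captured x)) => Hcx; first by rewrite ct_capt.
    have [t2 [H2 Hlt]] := SB x t1 Hcx Hx.
    have := IH t2 (step q x) ltac:(lia) H2.
    rewrite [capture_time q x]ct_step //.
    case: (capture_time q (step q x)) => //= t3 H3; lia.
Qed.

End Opt.

Lemma turn_play V n (p : profile V n) x k :
  nat_of_ord (turn (play p x k)) = (nat_of_ord (turn x) + k) %% n.+1.
Proof.
elim: k => [|k IH]; first by rewrite addn0 modn_small.
by rewrite playS turn_step /= IH -addn1 modnDml -addnA addn1.
Qed.

Lemma mod_case n b : b < n.+1 -> (n + b) %% n.+1 = if b is b'.+1 then b' else n.
Proof.
case: b => [|b] Hb; first by rewrite addn0 modn_small.
rewrite addnS -addSn modnDl modn_small //; lia.
Qed.

Unset Implicit Arguments.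

Theorem mainTheorem13
  (V : finType) (e : rel V) (Hg : simple_connected_graph e)
  (n : nat) (HN : 2 <= n) (* N = n.+1 >= 3 *)
  (gamma : R) (Hg0 : Rlt R0 gamma) (Hg1 : Rlt gamma R1)
  (s : state V n) (m : token n)
  (Hturn : turn s = robber n)
  (Hnc : ~~ captured s)
  (Hc : state_cop_number_is e s 1)
  (HC : hatC_is e gamma s m)
  (Hsure : sure_capture e gamma s m)
  (Hfar : ~~ e (position s m) (position s (robber n))) :
  exists s' : state V n,
    turn s' = robber n /\ ~~ captured s' /\
    (forall i, i != m -> position s' i = position s i) /\
    e (position s' m) (position s' (robber n)) /\
    state_cop_number_is e s' 1 /\
    hatC_is e gamma s' m /\
    sure_capture e gamma s' m.
Proof.
case: HC => Hcop [[P0 [HP0 _]] _].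
have Hm : m != robber n by exact: Hcop.
pose q : profile V n := fun i w => if i == m then P0 m w else position w i.
have Hq : legal_profile e q.
  move=> i w Hw; rewrite /q; case: ifP => [/eqP Hi|_].
  - rewrite Hi in Hw *; exact: HP0.1 m w Hw.
  - by rewrite /closed_nbr eqxx.
have Hqm : forall x, q m x = P0 m x by move=> x; rewrite /q eqxx.
have Hf0 : hatSigma e gamma m (P0 m) by exists P0.
have [T [HT HTm]] := Hsure (P0 m) Hf0 q Hq Hqm.
have Hpos : forall k i, i != m -> position (play q s k) i = position s i.
  elim=> [|k IH] i Hi //; rewrite playS pos_step; case: eqP => [Hit|_]; last exact: IH.
  rewrite /q -Hit (negbTE Hi); exact: IH.
have Hrm : robber n != m by rewrite eq_sym.
set u := position s (robber n).
have Hrob : forall k, position (play q s k) (robber n) = u by move=> k; exact: Hpos.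
have Hcap_of : forall w : state V n, position w m = position w (robber n) -> captured w.
  move=> w Hw; apply/existsP; exists m; by rewrite /is_cop Hm Hw eqxx.
case: T HT HTm => [|T1] HT HTm; first by move: Hnc; rewrite -[s]/(play q s 0) HT.1.
set y := play q s T1.
have Hy : ~~ captured y := HT.2 T1 (ltnSn T1).
have HuT : position (step q y) m = u by rewrite -playS HTm Hrob.
have Htm : turn y = m.
  apply/eqP; apply: contraT => Hne.
  move: HuT; rewrite pos_step eq_sym (negbTE Hne) => H.
  move: Hy; rewrite Hcap_of //; by rewrite H /y Hrob.
have Hstep_m : P0 m y = u by move: HuT; rewrite pos_step Htm eqxx Hqm.
have Hadj : e (position y m) u.
  have := HP0.1 m y Htm; rewrite Hstep_m /closed_nbr => /orP [/eqP H|//].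
  move: Hy; rewrite Hcap_of //; by rewrite -H /y Hrob.
have [a [b [HT1 Hb]]] : exists a b, T1 = a * n.+1 + b /\ b < n.+1.
  by exists (T1 %/ n.+1), (T1 %% n.+1); split; [exact: divn_eq | exact: ltn_pmod].
have Hvm : nat_of_ord m < n.
  have := ltn_ord m; rewrite ltnS leq_eqVlt => /orP [/eqP H|//].
  by move: Hm; rewrite -(inj_eq val_inj) /= H /robber /= eqxx.
have Hty : nat_of_ord (turn y) = (n + b) %% n.+1.
  by rewrite /y turn_play Hturn /= HT1 addnCA modnMDl.
move: Hty; rewrite Htm mod_case //.
case: b HT1 Hb => [|b'] HT1 Hb Hmb; first by move: Hvm; rewrite Hmb ltnn.
set L := a * n.+1.
have Hconst : forall j, j <= b'.+1 -> position (play q s (L + j)) m = position (play q s L) m.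
  elim=> [|j IH] Hj; first by rewrite addn0.
  rewrite addnS playS pos_step.
  have Hne : nat_of_ord (turn (play q s (L + j))) != m.
    rewrite turn_play Hturn /= addnCA /L modnMDl mod_case; last lia.
    case: j IH Hj => [|j] _ Hj; [by rewrite neq_ltn Hvm orbT | rewrite Hmb; lia].
  case: eqP => [E|_]; last exact: IH (ltnW Hj).
  by move: Hne; rewrite -E eqxx.
set s' := play q s L.
have Hs'turn : turn s' = robber n.
  apply: ord_inj; rewrite /s' turn_play Hturn /= addnC /L modnMDl modn_small //.
have HLT : L < T1.+1 by rewrite HT1 /L; lia.
have Hs'nc : ~~ captured s' := HT.2 L HLT.
have Hs'm : position s' m = position y m by rewrite /y HT1 Hconst.
have SC : forall f, hatSigma e gamma m f -> forall p, legal_profile e p ->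
    (forall x, p m x = f x) -> exists t, capture_at p s' t /\
      position (play p s' t) m = position (play p s' t) (robber n).
  move=> f [P [HP HPf]] p Hp Hpf.
  pose S : pred (state V n) := fun w => [exists k : 'I_L, play q s k == w].
  pose p' : profile V n := fun i w => if S w then q i w else p i w.
  have Hp' : legal_profile e p'.
    move=> i w Hw; rewrite /p'; case: (S w); [exact: Hq i w Hw | exact: Hp i w Hw].
  have Hmix := mix_opt Hg0 Hg1 S HP HP0 Hm.
  have Hf' : hatSigma e gamma m (p' m).
    exists (fun i w => if (i == m) && S w then P0 i w else P i w); split => // x.
    rewrite /p' eqxx /=; case: (S x); [by rewrite Hqm | by rewrite HPf Hpf].
  have [t [Ht Htm']] := Hsure (p' m) Hf' p' Hp' (fun x => erefl).
  have Hag1 : forall k, k <= L -> play p' s k = play q s k.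
    apply: agree_play => j Hj; apply: step_ext; rewrite /p'.
    have -> : S (play q s j) by apply/existsP; exists (Ordinal Hj).
    done.
  have HtL : L <= t.
    rewrite leqNgt; apply/negP => H.
    have := Ht.1; rewrite Hag1 ?(ltnW H) //.
    have := HT.2 t (ltn_trans H HLT); by move=> /negbTE ->.
  set j := t - L.
  have Htj : t = L + j by rewrite /j; lia.
  have Hshift : forall i, play p' s (L + i) = play p' s' i.
    by move=> i; rewrite playD Hag1.
  have NoS : forall i, i < j -> ~~ S (play p' s' i).
    move=> i Hi; apply/negP => /existsP [k /eqP Hk].
    have E : play p' s k = play p' s (L + i).
      by rewrite Hag1 ?(ltnW (ltn_ord k)) // Hk Hshift.
    have Hk1 : k <= L + i by have := ltn_ord k; lia.
    have Hk2 : k <= t - (L + i - k) by have := ltn_ord k; lia.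
    have E2 := period Hk1 E Hk2.
    rewrite (_ : t - (L + i - k) + (L + i - k) = t) in E2; last by have := ltn_ord k; lia.
    have Hlt : t - (L + i - k) < t by have := ltn_ord k; lia.
    have := Ht.2 _ Hlt; by rewrite -E2 Ht.1.
  have Hag2 : forall i, i <= j -> play p s' i = play p' s' i.
    apply: agree_play => i Hi; apply: step_ext; by rewrite /p' (negbTE (NoS i Hi)).
  exists j; split; first split.
  - rewrite Hag2 // -Hshift -Htj; exact: Ht.1.
  - move=> i Hi; rewrite Hag2 ?(ltnW Hi) // -Hshift; apply: Ht.2; lia.
  - rewrite Hag2 // -Hshift -Htj; exact: Htm'.
exists s'; split; first exact: Hs'turn.
split; first exact: Hs'nc.
split; first by move=> i Hi; exact: Hpos.
split; first by rewrite Hs'm /s' Hrob.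
split.
  split; first by apply/andP; split => //; lia.
  split.
  - exists [set m]; split; first exact: cards1.
    split; first by move=> i; rewrite in_set1 => /eqP ->.
    exists P0; split; first by move=> i; rewrite in_set1 => /eqP ->; exact: HP0.1 m.
    move=> p Hp Hagr.
    have [t [Ht _]] := SC _ Hf0 p Hp (Hagr m (set11 m)).
    by exists t; exact: Ht.1.
  - move=> k' /andP [H1 H2]; lia.
split.
  split; first exact: Hcop.
  split.
  - exists P0; split => //.
    have [t [Ht _]] := SC _ Hf0 P0 HP0.1 (fun _ => erefl).
    by exists t.
  - move=> p t Hp Hpt.
    have Hfp : hatSigma e gamma m (p m) by exists p.
    have [t' [Ht' Hm']] := SC _ Hfp p Hp.1 (fun _ => erefl).
    by rewrite (capture_at_uniq Hpt Ht').
exact: SC.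
Qed.
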